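(* For all integers $n$ and $\alpha$ such that $n+1\le\alpha\le (\frac n2)^2+\frac n2+1$ if $n$ is even, and $n+1\le\alpha\le(\frac{n-1}2)^2+n+1$ if $n$ is odd, there exists a minimal $n$-state nondeterministic finite automaton accepting a finite language over a binary alphabet whose equivalent minimal deterministic finite automaton has exactly $\alpha$ states.
   Context: NFAs have a single initial state and a transition function $\delta:Q\times\Sigma\to 2^Q$ that may map to the empty set (no sink state is needed or counted); DFAs are complete, so a sink state is counted. A minimal $n$-state NFA is an NFA with $n$ states such that no NFA with fewer states accepts the same language. *)

(* Defs.v *)
From mathcomp Require Import all_boot.
Set Implicit Arguments. Unset Strict Implicit. Unset Printing Implicit Defensive.

Definition word := seq bool.
Definition language := word -> bool.

Record nfa (n : nat) := NFA {
  nfa_init : 'I_n;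
  nfa_trans : 'I_n -> bool -> {set 'I_n};
  nfa_final : {set 'I_n} }.

Definition nfa_step n (A : nfa n) (X : {set 'I_n}) (a : bool) : {set 'I_n} :=
  \bigcup_(q in X) nfa_trans A q a.

Definition nfa_reach n (A : nfa n) (w : word) : {set 'I_n} :=
  foldl (nfa_step A) [set nfa_init A] w.

Definition nfa_accept n (A : nfa n) : language :=
  fun w => [exists q, (q \in nfa_final A) && (q \in nfa_reach A w)].

(* Complete DFA with n states (a sink state, if any, is counted). *)
Record dfa (n : nat) := DFA {
  dfa_init : 'I_n;
  dfa_trans : 'I_n -> bool -> 'I_n;
  dfa_final : {set 'I_n} }.

Definition dfa_accept n (D : dfa n) : language :=
  fun w => foldl (dfa_trans D) (dfa_init D) w \in dfa_final D.

Definition same_language (L L' : language) : Prop := forall w, L w = L' w.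

Definition finite_language (L : language) : Prop :=
  exists s : seq word, forall w, L w -> w \in s.

Definition minimal_nfa n (A : nfa n) : Prop :=
  forall m (B : nfa m), same_language (nfa_accept B) (nfa_accept A) -> n <= m.

Definition min_dfa_size (L : language) (k : nat) : Prop :=
  (exists D : dfa k, same_language (dfa_accept D) L) /\
  (forall m (D : dfa m), same_language (dfa_accept D) L -> k <= m).

Definition alpha_bound (n : nat) : nat :=
  if odd n then ((n - 1)./2) ^ 2 + n + 1 else (n./2) ^ 2 + n./2 + 1.

(* Main.v *)
Require Import Defs.
From mathcomp Require Import all_boot zify.
Set Implicit Arguments. Unset Strict Implicit. Unset Printing Implicit Defensive.

Lemma step_mono n (B : nfa n) (X Y : {set 'I_n}) c :
  X \subset Y -> nfa_step B X c \subset nfa_step B Y c.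
Proof.
move=> /subsetP XY; apply/subsetP => q /bigcupP [p pX qp].
by apply/bigcupP; exists p => //; apply: XY.
Qed.

Lemma foldl_mono n (B : nfa n) w : forall (X Y : {set 'I_n}),
  X \subset Y -> foldl (nfa_step B) X w \subset foldl (nfa_step B) Y w.
Proof.
elim: w => [//|c w IH] X Y XY /=; apply: IH; exact: step_mono.
Qed.

Lemma foldl_decomp n (B : nfa n) w : forall (X : {set 'I_n}) f,
  f \in foldl (nfa_step B) X w ->
  exists2 p, p \in X & f \in foldl (nfa_step B) [set p] w.
Proof.
elim: w => [|c w IH] X f /=.
  by move=> fX; exists f => //; rewrite inE.
move=> /IH [p' /bigcupP [p pX p'p] fp'].
exists p => //.
have H : [set p'] \subset nfa_step B [set p] c.
  by rewrite sub1set; apply/bigcupP; exists p => //; rewrite inE.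
rewrite /=; move: (foldl_mono B w H) => /subsetP; apply.
exact: fp'.
Qed.

Definition idxW n (A : nfa n) (W : seq word) k (X : {set 'I_n}) : 'I_k.+1 :=
  inord (find (fun w => nfa_reach A w == X) W).

Definition dfaW n (A : nfa n) (W : seq word) k : dfa k.+1 :=
  DFA (idxW A W k (nfa_reach A [::]))
      (fun (i : 'I_k.+1) c => idxW A W k (nfa_step A (nfa_reach A (nth [::] W i)) c))
      [set i : 'I_k.+1 | nfa_accept A (nth [::] W i)].

Lemma idxW_spec n (A : nfa n) W k X : size W = k.+1 ->
  has (fun w => nfa_reach A w == X) W ->
  nfa_reach A (nth [::] W (idxW A W k X)) = X.
Proof.
move=> sW hW; rewrite /idxW inordK; last by rewrite -sW -has_find.
by apply/eqP; exact: (nth_find [::] hW).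
Qed.

Lemma nfa_accept_reach n (A : nfa n) u v :
  nfa_reach A u = nfa_reach A v -> nfa_accept A u = nfa_accept A v.
Proof. by rewrite /nfa_accept => ->. Qed.

Lemma dfaW_correct n (A : nfa n) W k : size W = k.+1 ->
  has (fun w => nfa_reach A w == nfa_reach A [::]) W ->
  (forall w, w \in W -> forall c,
     has (fun w' => nfa_reach A w' == nfa_step A (nfa_reach A w) c) W) ->
  same_language (dfa_accept (dfaW A W k)) (nfa_accept A).
Proof.
move=> sW h0 hc.
have inv : forall u, (foldl (dfa_trans (dfaW A W k)) (dfa_init (dfaW A W k)) u < size W)
   /\ nfa_reach A (nth [::] W (foldl (dfa_trans (dfaW A W k)) (dfa_init (dfaW A W k)) u))
      = nfa_reach A u.
  elim/last_ind => [|u c [IH1 IH2]] /=.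
    by rewrite sW ltn_ord idxW_spec.
  rewrite !foldl_rcons /= sW ltn_ord; split => //.
  rewrite idxW_spec //; first by rewrite IH2 /nfa_reach foldl_rcons.
  by apply: hc; apply: mem_nth.
move=> u; rewrite /dfa_accept /= inE; apply: nfa_accept_reach.
by case: (inv u).
Qed.

Lemma dfa_lower n (A : nfa n) m (D : dfa m) (W : seq word) :
  (forall u v, (forall z, nfa_accept A (u ++ z) = nfa_accept A (v ++ z)) ->
     nfa_reach A u = nfa_reach A v) ->
  same_language (dfa_accept D) (nfa_accept A) ->
  uniq (map (nfa_reach A) W) -> size W <= m.
Proof.
move=> Hsep HD uW.
pose st := fun u => foldl (dfa_trans D) (dfa_init D) u.
have key : forall u v, st u = st v -> nfa_reach A u = nfa_reach A v.
  move=> u v e; apply: Hsep => z; rewrite -!HD /dfa_accept !foldl_cat.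
  by rewrite -/(st u) -/(st v) e.
pose h := fun q => nfa_reach A (nth [::] W (index q (map st W))).
have eqm : map (nfa_reach A) W = map h (map st W).
  rewrite -map_comp; apply/eq_in_map => u uW' /=.
  rewrite /h; apply: key.
  have iu : index (st u) (map st W) < size W.
    by rewrite -(size_map st) index_mem map_f.
  rewrite -(nth_map [::] (dfa_init D) st iu) nth_index //.
  exact: map_f.
have us : uniq (map st W) by apply: (@map_uniq _ _ h); rewrite -eqm.
rewrite -(size_map st) -(card_uniqP us).
by apply: leq_trans (max_card _) _; rewrite card_ord.
Qed.

Lemma nfa_lower m (B : nfa m) (w0 : word) :
  nfa_accept B w0 -> (forall w, nfa_accept B w -> size w <= size w0) ->
  size w0 < m.
Proof.
move=> acc0 bnd.
pose k := size w0.
pose P := fun (i : 'I_k.+1) (p : 'I_m) =>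
  (p \in nfa_reach B (take i w0)) &&
  [exists f, (f \in nfa_final B) && (f \in foldl (nfa_step B) [set p] (drop i w0))].
have ex : forall i, exists p, P i p.
  move=> i; move: acc0; rewrite /nfa_accept => /existsP [f /andP [fF fR]].
  move: fR; rewrite /nfa_reach -(cat_take_drop i w0) foldl_cat.
  move=> /foldl_decomp [p pR fp]; exists p; apply/andP; split => //.
  by apply/existsP; exists f; rewrite fF.
pose g := fun i => odflt (nfa_init B) [pick p | P i p].
have gP : forall i, P i (g i).
  move=> i; rewrite /g; case: pickP => [p //|none].
  by have [p Pp] := ex i; move: (none p); rewrite Pp.
have gi : injective g.
  have H : forall i j : 'I_k.+1, i < j -> g i = g j -> False.
    move=> i j ij e.
    have /andP [_ /existsP [f /andP [fF fi]]] := gP i.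
    have /andP [pj _] := gP j.
    have acc : nfa_accept B (take j w0 ++ drop i w0).
      apply/existsP; exists f; rewrite fF /nfa_reach foldl_cat /=.
      have sub : [set g i] \subset foldl (nfa_step B) [set nfa_init B] (take j w0).
        by rewrite sub1set e.
      by move: (foldl_mono B (drop i w0) sub) => /subsetP; apply.
    move: (bnd _ acc); rewrite size_cat size_take size_drop.
    have := ltn_ord j; have := ltn_ord i; rewrite -/k => hi hj.
    case: ifP; lia.
  move=> i j e; case: (ltngtP i j) => [ij|ji|/val_inj //].
    by case: (H _ _ ij e).
  by case: (H _ _ ji (esym e)).
by have := leq_card g gi; rewrite !card_ord.
Qed.

Definition Dp (J d r : nat) : bool := (r < 2 * J) || (r == d).
Definition Rf J d r (w : word) :=
  foldl (fun r (c : bool) => r + 1 + (c && Dp J d r)) r w.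
Definition itv n t r : {set 'I_n} := [set q : 'I_n | t <= q <= r].
Definition Anfa n (Hn : 0 < n) J d : nfa n :=
  NFA (Ordinal Hn)
    (fun (q : 'I_n) (c : bool) => [set q' : 'I_n | (q' == q.+1 :> nat) || [&& c, Dp J d q & (q' == q.+2 :> nat)]])
    [set q : 'I_n | q == n.-1 :> nat].

Lemma Rf_ge J d w : forall r, r + size w <= Rf J d r w.
Proof. elim: w => [|c w IH] r /=; first by rewrite addn0.
have := IH (r + 1 + (c && Dp J d r)); lia. Qed.

Lemma Rf_cat J d u v r : Rf J d r (u ++ v) = Rf J d (Rf J d r u) v.
Proof. by rewrite /Rf foldl_cat. Qed.

Lemma Rf_nseqb J d k r : Rf J d r (nseq k false) = r + k.
Proof. elim: k r => [|k IH] r /=; first by rewrite addn0.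
rewrite IH; lia. Qed.

Lemma Rf_rcons J d u c r : Rf J d r (rcons u c) = Rf J d r u + 1 + (c && Dp J d (Rf J d r u)).
Proof. by rewrite /Rf foldl_rcons. Qed.

Lemma step_itv n (Hn : 0 < n) J d t r c : t <= r ->
  nfa_step (Anfa Hn J d) (itv n t r) c = itv n t.+1 (r + 1 + (c && Dp J d r)).
Proof.
move=> tr; apply/setP => q'; rewrite /itv inE; apply/bigcupP/idP.
  move=> [q]; rewrite !inE /= => /andP [h1 h2] /orP [/eqP e|/and3P [cc Dq /eqP e]].
    rewrite e; case: (c && Dp J d r); lia.
  rewrite e cc /=; case: (ltngtP q r) => [qr|rq|qr]; first lia; first lia.
  by move: Dq; rewrite qr => ->; lia.
move=> /andP [h1 h2].
case: (leqP q' r.+1) => h3.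
  have hq : q'.-1 < n by have := ltn_ord q'; lia.
  exists (Ordinal hq); rewrite !inE /=; first lia.
  apply/orP; left; apply/eqP; lia.
have hr : r < n by have := ltn_ord q'; lia.
exists (Ordinal hr); rewrite !inE /=; first lia.
move: h2 h3; case: c; case: (Dp J d r) => /= h2 h3; lia.
Qed.

Lemma reach_itv n (Hn : 0 < n) J d w :
  nfa_reach (Anfa Hn J d) w = itv n (size w) (Rf J d 0 w).
Proof.
elim/last_ind: w => [|u c IH].
  apply/setP => q; rewrite /nfa_reach /= !inE; apply/eqP/idP => [->//|].
  by move=> h; apply/val_inj => /=; lia.
rewrite /nfa_reach foldl_rcons -/(nfa_reach _ u) IH step_itv; last first.
  by have := Rf_ge J d u 0.
by rewrite size_rcons Rf_rcons addn1.
Qed.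

Lemma accept_eq n (Hn : 0 < n) J d w :
  nfa_accept (Anfa Hn J d) w = (size w <= n.-1 <= Rf J d 0 w).
Proof.
rewrite /nfa_accept reach_itv; apply/existsP/idP.
  by move=> [q /andP []]; rewrite !inE => /eqP ->.
move=> h; have hq : n.-1 < n by lia.
by exists (Ordinal hq); rewrite !inE /= eqxx.
Qed.

Lemma sep_A n (Hn : 0 < n) J d u v :
  (forall z, nfa_accept (Anfa Hn J d) (u ++ z) = nfa_accept (Anfa Hn J d) (v ++ z)) ->
  nfa_reach (Anfa Hn J d) u = nfa_reach (Anfa Hn J d) v.
Proof.
move=> H; apply/setP => q; have := H (nseq (n.-1 - q) false).
rewrite !accept_eq !reach_itv !inE !size_cat !Rf_cat !Rf_nseqb size_nseq.
have := ltn_ord q.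
lia.
Qed.

Definition Reg n J d (x : nat * nat) : bool :=
  ((x.1 == n) && (x.2 == n)) ||
  [&& x.1 <= x.2, x.2 < n & ((x.2 <= x.1 + J) && (x.2 <= 2 * x.1)) ||
                            ((x.2 == x.1 + J.+1) && (d + 2 <= x.2))].

Definition normP n (a b : nat) : nat * nat := if n <= a then (n, n) else (a, minn b n.-1).

Lemma Reg_closed n J d t r (c : bool) : 0 < n -> 2 * J + 1 <= d ->
  Reg n J d (t, r) -> Reg n J d (normP n t.+1 (r + 1 + (c && Dp J d r))).
Proof.
move=> Hn Hd; rewrite /Reg /normP /Dp /=.
case: (leqP n t.+1) => /= h; first by rewrite !eqxx.
case: c => /=; lia.
Qed.

Definition rowsP n J : seq (nat * nat) :=
  [seq (t, t + j) | j <- iota 0 J.+1, t <- iota j (n - 2 * j)].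
Definition partP n J d : seq (nat * nat) :=
  [seq (t, t + J.+1) | t <- iota (d - J + 1) (n - 2 - d)].
Definition Pl n J d := (n, n) :: rowsP n J ++ partP n J d.

Lemma mem_rowsP n J x : 2 * J + 1 <= n ->
  (x \in rowsP n J) = [&& x.1 <= x.2, x.2 < n, x.2 <= x.1 + J & x.2 <= 2 * x.1].
Proof.
move=> hJ; apply/allpairsPdep/idP.
  move=> [j [t [hj ht ->]]]; move: hj ht; rewrite !mem_iota /=; lia.
case: x => t r /= h; exists (r - t), t; split; rewrite ?in_cons ?mem_iota; try lia.
congr pair; lia.
Qed.

Lemma mem_partP n J d x : 2 * J + 1 <= d ->
  (x \in partP n J d) = [&& x.2 < n, x.2 == x.1 + J.+1 & d + 2 <= x.2].
Proof.
move=> hd; apply/mapP/idP.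
  by move=> [t ht ->]; move: ht; rewrite mem_iota /=; lia.
case: x => t r /= h; exists t; rewrite ?mem_iota; first lia.
congr pair; lia.
Qed.

Lemma mem_Pl n J d x : 2 * J + 1 <= n -> 2 * J + 1 <= d ->
  (x \in Pl n J d) = Reg n J d x.
Proof.
move=> hn hd; rewrite /Pl in_cons mem_cat mem_rowsP // mem_partP // /Reg.
case: x => t r /=; rewrite xpair_eqE; lia.
Qed.

Lemma uniq_Pl n J d : 2 * J + 1 <= n -> 2 * J + 1 <= d -> uniq (Pl n J d).
Proof.
move=> hn hd; rewrite /Pl cons_uniq mem_cat mem_rowsP // mem_partP //= cat_uniq.
apply/and4P; split.
- lia.
- apply: allpairs_uniq_dep; first exact: iota_uniq.
    by move=> j _; exact: iota_uniq.
  move=> [j1 t1] [j2 t2] _ _ /= [e1 e2].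
  have ej : j1 = j2 by lia.
  subst j2 t2; reflexivity.
- apply/hasPn => x; rewrite mem_partP // mem_rowsP //; lia.
- rewrite map_inj_uniq ?iota_uniq // => t1 t2 [] //.
Qed.

Lemma sumn_rows n J : 2 * J <= n ->
  sumn [seq n - 2 * j | j <- iota 0 J.+1] = J.+1 * (n - J).
Proof.
elim: J => [|J IH] h; first by rewrite /=; lia.
have -> : iota 0 J.+2 = iota 0 J.+1 ++ [:: J.+1] by rewrite -addn1 iotaD.
rewrite map_cat sumn_cat IH; last lia.
rewrite /= addn0.
have [m ->] : exists m, n = m + 2 * J.+1 by exists (n - 2 * J.+1); lia.
have -> : m + 2 * J.+1 - J = m + J.+2 by lia.
have -> : m + 2 * J.+1 - J.+1 = m + J.+1 by lia.
have -> : m + 2 * J.+1 - 2 * J.+1 = m by lia.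
nia.
Qed.

Lemma size_Pl n J d : 2 * J + 1 <= n ->
  size (Pl n J d) = 1 + J.+1 * (n - J) + (n - 2 - d).
Proof.
move=> hn; rewrite /Pl /= size_cat /rowsP /partP size_map size_iota.
rewrite size_allpairs_dep.
have -> : [seq size (iota j (n - 2 * j)) | j <- iota 0 J.+1] = [seq n - 2 * j | j <- iota 0 J.+1].
  by apply: eq_map => j; rewrite size_iota.
rewrite sumn_rows; lia.
Qed.

Definition wordP n J d (x : nat * nat) : word :=
  if x.1 == n then nseq n false
  else if x.2 - x.1 <= J then nseq (x.2 - x.1) true ++ nseq (x.1 - (x.2 - x.1)) false
  else nseq J true ++ nseq (d - 2 * J) false ++ true :: nseq (x.1 - (d - J + 1)) false.

Lemma Rf_trues J d k : k <= J -> Rf J d 0 (nseq k true) = 2 * k.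
Proof.
elim: k => [//|k IH] h.
rewrite -[k.+1]addn1 nseqD cats1 Rf_rcons IH; last lia.
rewrite /Dp /=; have -> : 2 * k < 2 * J by lia.
lia.
Qed.

Lemma wordP_spec n J d x : 2 * J + 1 <= d -> Reg n J d x ->
  size (wordP n J d x) = x.1 /\ Rf J d 0 (wordP n J d x) = x.2.
Proof.
move=> hd; case: x => t r; rewrite /Reg /wordP /=.
case: eqP => [-> /orP [/andP [_ /eqP ->]|]|tn].
- by rewrite size_nseq Rf_nseqb.
- lia.
rewrite /= => /and3P [h1 h2 h3].
case: ifP => hj.
  rewrite size_cat !size_nseq Rf_cat Rf_trues // Rf_nseqb; split; lia.
rewrite !size_cat /= !size_nseq !Rf_cat Rf_trues // Rf_nseqb.
rewrite -cat1s Rf_cat Rf_nseqb /= /Dp.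
have -> : 2 * J + (d - 2 * J) = d by lia.
rewrite eqxx orbT; split; lia.
Qed.

Lemma itv_norm n a b : a <= b ->
  itv n (normP n a b).1 (normP n a b).2 = itv n a b.
Proof.
move=> ab; apply/setP => q; rewrite /normP /itv; have := ltn_ord q.
case: (leqP n a) => /= h hq; rewrite !inE; lia.
Qed.

Lemma itv_inj n J d x y : Reg n J d x -> Reg n J d y ->
  itv n x.1 x.2 = itv n y.1 y.2 -> x = y.
Proof.
case: x => t r; case: y => t' r'; rewrite /Reg /= => hx hy e.
have mem : forall k, k < n -> (t <= k <= r) = (t' <= k <= r').
  move=> k hk; move/setP: e => /(_ (Ordinal hk)); by rewrite !inE.
case/orP: hx => [/andP [/eqP hxt /eqP hxr]|hx].
  case/orP: hy => [/andP [/eqP hyt /eqP hyr]|hy]; first by congr pair; lia.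
  have : t' < n by lia. move=> h; have := mem _ h; lia.
case/orP: hy => [/andP [/eqP ht /eqP hr]|hy].
  have : t < n by lia. move=> h; have := mem _ h; lia.
have ht : t < n by lia. have ht' : t' < n by lia.
have hr : r < n by lia. have hr' : r' < n by lia.
have := mem _ ht; have := mem _ ht'; have := mem _ hr; have := mem _ hr'.
move=> e1 e2 e3 e4; congr pair; lia.
Qed.

Lemma bound_form n : 1 <= n -> exists Jm,
  2 * Jm + 1 <= n /\ alpha_bound n = 1 + Jm.+1 * (n - Jm).
Proof.
move=> hn; rewrite /alpha_bound.
have e := odd_double_half n.
move: (odd n) (n./2) e => b k e; subst n.
case: b hn => /= hn.
  exists k; have -> : 1 + k.*2 - 1 = false + k.*2 by rewrite add0n addKn.
  rewrite half_bit_double -!muln2.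
  split; first lia. nia.
rewrite add0n in hn *; rewrite -!muln2 in hn *.
have [j ->] : exists j, k = j.+1 by exists k.-1; lia.
exists j; have -> : j.+1 * 2 - j = j.+2 by lia.
split; first lia. nia.
Qed.

Lemma choose_Jd n alpha : 1 <= n -> n + 1 <= alpha -> alpha <= alpha_bound n ->
  exists J d, [/\ 2 * J + 1 <= n, 2 * J + 1 <= d & alpha = 1 + J.+1 * (n - J) + (n - 2 - d)].
Proof.
move=> hn h1 h2; have [Jm [hJm eb]] := bound_form hn.
rewrite eb in h2.
suff Q : forall K, 2 * K + 1 <= n -> alpha <= 1 + K.+1 * (n - K) ->
  exists J d, [/\ 2 * J + 1 <= n, 2 * J + 1 <= d & alpha = 1 + J.+1 * (n - J) + (n - 2 - d)].
  exact: Q hJm h2.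
elim=> [|K IH] hK hA.
  exists 0, (maxn (n - 2) 1); split; lia.
case: (leqP alpha (1 + K.+1 * (n - K))) => hA'.
  apply: IH => //; lia.
have eK : K.+2 * (n - K.+1) = K.+1 * (n - K) + (n - 2 * K - 2).
  have [m ->] : exists m, n = m + 2 * K.+1 + 1 by exists (n - 2 * K.+1 - 1); lia.
  have -> : m + 2 * K.+1 + 1 - K.+1 = m + K.+2 by lia.
  have -> : m + 2 * K.+1 + 1 - K = m + K.+3 by lia.
  have -> : m + 2 * K.+1 + 1 - 2 * K - 2 = m + 1 by lia.
  nia.
rewrite eK in hA.
case: (ltnP alpha (1 + K.+2 * (n - K.+1))) => hA2.
  rewrite eK in hA2.
  exists K, (n - 2 - (alpha - 1 - K.+1 * (n - K))); split; lia.
exists K.+1, (maxn (n - 2) (2 * K.+1 + 1)); rewrite eK; split; lia.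
Qed.

Fixpoint allw (k : nat) : seq word :=
  if k is k'.+1 then [seq c :: w | c <- [:: true; false], w <- allw k'] else [:: [::]].

Lemma mem_allw w : w \in allw (size w).
Proof.
elim: w => [|c w IH] //=; rewrite !mem_cat.
by case: c; rewrite ?(map_f (cons true) IH) ?(map_f (cons false) IH) ?orbT.
Qed.

Theorem mainTheorem10 (n alpha : nat) :
  1 <= n -> n + 1 <= alpha -> alpha <= alpha_bound n ->
  exists A : nfa n,
    [/\ minimal_nfa A, finite_language (nfa_accept A)
      & min_dfa_size (nfa_accept A) alpha].
Proof.
move=> hn h1 h2; have [J [d [hJ hd ea]]] := choose_Jd hn h1 h2.
pose A := Anfa hn J d.
have accb : forall w, nfa_accept A w -> size w <= n.-1.
  by move=> w; rewrite accept_eq => /andP [].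
exists A; split.
- move=> m B HB.
  have acc0 : nfa_accept B (nseq n.-1 false).
    by rewrite HB accept_eq size_nseq Rf_nseqb; apply/andP; split.
  have H : forall w, nfa_accept B w -> size w <= size (nseq n.-1 false).
    by move=> w; rewrite HB size_nseq; apply: accb.
  have := nfa_lower acc0 H; rewrite size_nseq; lia.
- exists (flatten [seq allw k | k <- iota 0 n]) => w /accb hw.
  apply/flatten_mapP; exists (size w); last exact: mem_allw.
  rewrite mem_iota; lia.
pose W := map (wordP n J d) (Pl n J d).
have sW : size W = alpha by rewrite size_map size_Pl.
have rW : forall x, x \in Pl n J d -> nfa_reach A (wordP n J d x) = itv n x.1 x.2.
  move=> x; rewrite mem_Pl // => /(wordP_spec hd) [e1 e2].
  by rewrite reach_itv e1 e2.
split.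
- have [k ek] : exists k, alpha = k.+1 by exists alpha.-1; lia.
  rewrite ek; exists (dfaW A W k); apply: dfaW_correct.
  + by rewrite sW.
  + apply/hasP; exists (wordP n J d (0, 0)).
      apply: map_f; rewrite mem_Pl // /Reg /=; lia.
    rewrite rW; last by rewrite mem_Pl // /Reg /=; lia.
    rewrite reach_itv /=; by [].
  + move=> w /mapP [x xP ->] c.
    have xR : Reg n J d x by rewrite -mem_Pl.
    have x12 : x.1 <= x.2.
      move: xR; case: x {xP} => t r; rewrite /Reg /=; lia.
    pose y := normP n x.1.+1 (x.2 + 1 + (c && Dp J d x.2)).
    have yP : y \in Pl n J d.
      rewrite mem_Pl // /y.
      have := @Reg_closed n J d x.1 x.2 c hn hd; rewrite -surjective_pairing; apply.
      exact: xR.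
    apply/hasP; exists (wordP n J d y); first exact: map_f.
    rewrite rW // rW // step_itv // itv_norm //; lia.
- move=> m D HD; rewrite -sW.
  apply: (dfa_lower (@sep_A n hn J d) HD).
  have -> : map (nfa_reach A) W = map (fun x => itv n x.1 x.2) (Pl n J d).
    by rewrite -map_comp; apply/eq_in_map => x xP /=; rewrite rW.
  rewrite map_inj_in_uniq; first exact: uniq_Pl.
  move=> x y xP yP e; apply: (@itv_inj n J d x y _ _ e); by rewrite -mem_Pl.
Qed.
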